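(* Let $n\ge 2$, $\rho>0$ and $\omega\in S^{n-1}$. Let $P(\tau,\xi) = -\tau^2 + \xi\cdot\xi + i\tau\,\xi\cdot\xi$ for $(\tau,\xi)\in\mathbb{C}\times\mathbb{C}^n$, $\zeta^o = (-i\rho^2, i\rho\omega)$, $P_o(\zeta) = P(\zeta+\zeta^o)$ and $N = (1,0,\ldots,0)\in\mathbb{R}\times\mathbb{R}^n$. Suppose $\sigma(\zeta)$ is a solution of $P_o(\zeta+\sigma N) = 0$, $\zeta = (\tau,\xi)\in\mathbb{C}\times\mathbb{C}^n$, which is analytic and single-valued in a ball $B\subset\mathbb{C}\times\mathbb{C}^n$ with real center and radius $1$. Then $\sup_{\zeta\in B}\operatorname{Im}\sigma(\zeta)\ge 0$. *)

(* Defs.v *)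
From mathcomp Require Import all_boot all_algebra complex.
From mathcomp Require Import all_classical all_reals ereal.
Import GRing.Theory Num.Theory.
Local Open Scope ring_scope.
Local Open Scope complex_scope.
Local Open Scope classical_set_scope.

Set Implicit Arguments. Unset Strict Implicit. Unset Printing Implicit Defensive.

Definition cmono (R : realType) (m : nat) (z z0 : 'I_m -> R[i]) (a : 'I_m -> nat)
  : R[i] := \prod_(i < m) (z i - z0 i) ^+ a i.

Definition box_sum (R : realType) (m : nat) (c : ('I_m -> nat) -> R[i])
  (z0 z : 'I_m -> R[i]) (K : nat) : R[i] :=
  \sum_(a : {ffun 'I_m -> 'I_K}) c (fun i => nat_of_ord (a i)) * cmono z z0 (fun i => nat_of_ord (a i)).

Definition box_abs_sum (R : realType) (m : nat) (c : ('I_m -> nat) -> R[i])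
  (z0 z : 'I_m -> R[i]) (K : nat) : R[i] :=
  \sum_(a : {ffun 'I_m -> 'I_K}) `|c (fun i => nat_of_ord (a i))| * `|cmono z z0 (fun i => nat_of_ord (a i))|.

(* f is given near z0 (inside D) by an absolutely convergent power series
   sum_a c_a (z - z0)^a on some polydisc of radius r > 0 *)
Definition power_series_at (R : realType) (m : nat) (D : set ('I_m -> R[i]))
  (f : ('I_m -> R[i]) -> R[i]) (z0 : 'I_m -> R[i]) : Prop :=
  exists (c : ('I_m -> nat) -> R[i]) (r : R), 0 < r /\
    forall z, D z -> (forall i, `|z i - z0 i| < r%:C) ->
      (exists M : R, forall K, box_abs_sum c z0 z K <= M%:C) /\
      (forall e : R, 0 < e -> exists K0 : nat, forall K, (K0 <= K)%N ->
          `|box_sum c z0 z K - f z| < e%:C).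

(* f is (complex-)analytic (and single-valued, being a function) on D *)
Definition analytic_on (R : realType) (m : nat) (D : set ('I_m -> R[i]))
  (f : ('I_m -> R[i]) -> R[i]) : Prop :=
  forall z0, D z0 -> power_series_at D f z0.

Definition ball1 (R : realType) (m : nat) (c : 'I_m -> R) : set ('I_m -> R[i]) :=
  [set z | \sum_(i < m) `|z i - (c i)%:C| ^+ 2 < 1].

(* bilinear (non-Hermitian) dot product xi . xi *)
Definition cdot (R : realType) (n : nat) (x y : 'I_n -> R[i]) : R[i] :=
  \sum_(j < n) x j * y j.

(* P(tau, xi) = - tau^2 + xi.xi + i tau xi.xi ;  zeta = (tau, xi) is encoded as
   z : 'I_n.+1 -> R[i] with tau = z 0 and xi_j = z (j+1) *)
Definition Pop (R : realType) (n : nat) (tau : R[i]) (xi : 'I_n -> R[i]) : R[i] :=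
  - tau ^+ 2 + cdot xi xi + 'i * tau * cdot xi xi.

Definition Ptot (R : realType) (n : nat) (z : 'I_n.+1 -> R[i]) : R[i] :=
  Pop (z ord0) (fun j => z (lift ord0 j)).

Definition zeta_o (R : realType) (n : nat) (rho : R) (omega : 'I_n -> R)
  : 'I_n.+1 -> R[i] :=
  fun k => match unlift ord0 k with
           | None => - 'i * (rho ^+ 2)%:C
           | Some j => 'i * (rho * omega j)%:C
           end.

Definition P_o (R : realType) (n : nat) (rho : R) (omega : 'I_n -> R)
  (z : 'I_n.+1 -> R[i]) : R[i] :=
  Ptot (fun k => z k + zeta_o rho omega k).

Definition Ndir (R : realType) (n : nat) : 'I_n.+1 -> R[i] :=
  fun k => if k == ord0 then 1 else 0.

(* Main.v *)
Require Import Defs.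
From mathcomp Require Import all_boot all_algebra complex.
From mathcomp Require Import all_classical all_reals ereal.
From mathcomp Require Import all_order ring lra.
Import Order.TTheory GRing.Theory Num.Theory.
Local Open Scope ring_scope.
Local Open Scope complex_scope.
Local Open Scope classical_set_scope.

Lemma key_bound (R : realFieldType) (rho x y A B : R) : 0 < rho -> -(rho^+2) <= A ->
  x^+2 - y^+2 + A*y + B*x - A = 0 -> 2*x*y - A*x + B*y - B = 0 -> -(rho^+2) - 1 < y.
Proof.
move=> hr hA hre him.
rewrite ltNge; apply/negP => hy.
have hr2 : 0 <= rho^+2 := sqr_ge0 rho.
have hd : 0 < A - 2*y by nra.
have hx : x * (A - 2*y) = - B * (1 - y) by nra.
have e1 : (x * (A - 2*y))^+2 + B * (x * (A-2*y)) * (A - 2*y) = (y^+2 + A*(1-y)) * (A-2*y)^+2.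
  have -> : y^+2 + A*(1-y) = x^+2 + B*x by nra.
  ring.
rewrite hx in e1.
have e2 : (- B * (1 - y))^+2 + B * (- B * (1 - y)) * (A - 2*y) = B^+2 * (1-y) * (1 + y - A) by ring.
rewrite e2 in e1.
have l1 : B^+2 * (1-y) * (1 + y - A) <= 0.
  have h1 : 1 + y - A <= 0 by lra.
  have h2 : 0 <= B^+2 * (1-y) by apply: mulr_ge0; [exact: sqr_ge0| lra].
  exact: mulr_ge0_le0.
have l2 : 0 < (y^+2 + A*(1-y)) * (A-2*y)^+2.
  apply: mulr_gt0; last by apply: exprn_gt0.
  nra.
lra.
Qed.

Lemma root_Im (R : rcfType) (rho A B : R) (T : R[i]) : 0 < rho -> -(rho^+2) <= A ->
  T^+2 - 'i * (A +i* B) * T - (A +i* B) = 0 -> -(rho^+2) - 1 < complex.Im T.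
Proof.
case: T => x y hr hA E.
have h1 := congr1 (@complex.Re R) E; have h2 := congr1 (@complex.Im R) E.
simpl in h1, h2.
apply: (@key_bound _ rho x y A B hr hA).
- rewrite -h1; ring.
- rewrite -h2; ring.
Qed.

Lemma root_two (R : rcfType) (q T T' : R[i]) :
  T^+2 - 'i * q * T - q = 0 -> T'^+2 - 'i * q * T' - q = 0 -> T' = T \/ T' = 'i * q - T.
Proof.
move=> E E'.
have : (T' - T) * (T' - ('i * q - T)) = 0.
  rewrite -[RHS](subrr 0); rewrite -{1}E' -{1}E; ring.
move/eqP; rewrite mulf_eq0 => /orP [h|h]; [left|right]; apply/eqP; by rewrite -subr_eq0.
Qed.

Lemma sum_complex (R : rcfType) (n : nat) (f g : 'I_n -> R) :
  \sum_(j < n) (f j +i* g j) = (\sum_(j < n) f j) +i* (\sum_(j < n) g j).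
Proof.
elim: n f g => [|n IH] f g; first by rewrite !big_ord0.
by rewrite !big_ord_recr /= IH.
Qed.

Lemma norm2c (R : rcfType) (z : R[i]) :
  `|z| ^+ 2 = ((complex.Re z)^+2 + (complex.Im z)^+2)%:C.
Proof.
rewrite normc_def -rmorphXn sqr_sqrtr //.
by apply: addr_ge0; apply: sqr_ge0.
Qed.

Definition pt (R : realType) (n : nat) (c : 'I_n.+1 -> R) (s : R) : 'I_n.+1 -> R[i] :=
  fun k => c k +i* (if k == ord0 then - s else 0).
Arguments pt {R n}.

Lemma ball_pt (R : realType) (n : nat) (c : 'I_n.+1 -> R) (s : R) :
  0 <= s < 1 -> ball1 c (pt c s).
Proof.
move=> /andP [h0 h1]; rewrite /ball1 /=.
rewrite big_ord_recl big1; last first.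
  move=> j _; rewrite /pt eq_sym (negbTE (neq_lift ord0 j)).
  rewrite norm2c /=.
  by rewrite !subrr !expr2 !mulr0 addr0.
rewrite /pt eqxx norm2c /= addr0 ltcE /= eqxx /=.
rewrite subrr subr0; nra.
Qed.

Lemma eq_pt (R : realType) (n : nat) (rho : R) (omega : 'I_n -> R)
  (homega : \sum_(j < n) omega j ^+ 2 = 1) (c : 'I_n.+1 -> R) (s : R) (sg : R[i]) :
  P_o rho omega (fun k => pt c s k + sg * @Ndir R n k) = 0 ->
  let T := sg + pt c s ord0 - 'i * (rho ^+ 2)%:C in
  let q := (\sum_(j < n) c (lift ord0 j) ^+ 2 - rho ^+ 2) +i*
           (2 * rho * \sum_(j < n) c (lift ord0 j) * omega j) in
  T ^+ 2 - 'i * q * T - q = 0.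
Proof.
rewrite /P_o /Ptot /Pop /zeta_o /Ndir unlift_none eqxx.
have Hl : forall j : 'I_n, (lift ord0 j == ord0) = false.
  by move=> j; rewrite eq_sym (negbTE (neq_lift ord0 j)).
under eq_fun do rewrite Hl liftK.
set q := (_ +i* _).
have Hq : cdot (fun x : 'I_n.+1.-1 =>
     pt c s (lift ord0 x) + sg * 0 + 'i * (rho * omega x)%:C)
    (fun x : 'I_n.+1.-1 =>
     pt c s (lift ord0 x) + sg * 0 + 'i * (rho * omega x)%:C) = q.
  rewrite /cdot.
  under eq_bigr => j _.
    have -> : (pt c s (lift ord0 j) + sg * 0 + 'i * (rho * omega j)%:C) *
      (pt c s (lift ord0 j) + sg * 0 + 'i * (rho * omega j)%:C) =
      (c (lift ord0 j) ^+ 2 - rho ^+ 2 * omega j ^+ 2) +i* (2 * rho * (c (lift ord0 j) * omega j)).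
      rewrite /pt Hl mulr0 addr0 /=.
      apply/eqP; rewrite eq_complex /=; apply/andP; split; apply/eqP; ring.
    over.
  rewrite sum_complex /q sumrB -mulr_sumr homega mulr1 -mulr_sumr.
  by [].
rewrite Hq mulr1 => E.
rewrite -[RHS]oppr0 -E; ring.
Qed.

Lemma Im_pt (R : realType) (n : nat) (c : 'I_n.+1 -> R) (rho s : R) (w : R[i]) :
  complex.Im (w + pt c s ord0 - 'i * (rho ^+ 2)%:C) = complex.Im w - s - rho ^+ 2.
Proof. rewrite /pt eqxx; case: w => a b /=; ring. Qed.

Theorem lemma1 (R : realType) (n : nat) (hn : (2 <= n)%N)
  (rho : R) (hrho : 0 < rho)
  (omega : 'I_n -> R) (homega : \sum_(j < n) omega j ^+ 2 = 1)
  (c : 'I_n.+1 -> R)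
  (sigma : ('I_n.+1 -> R[i]) -> R[i])
  (hsol : forall z, ball1 c z ->
            P_o rho omega (fun k => z k + sigma z * @Ndir R n k) = 0)
  (han : analytic_on (ball1 c) sigma) :
  (0 <= ereal_sup [set (complex.Im (sigma z))%:E | z in ball1 c])%E.
Proof.
set A := \sum_(j < n) c (lift ord0 j) ^+ 2 - rho ^+ 2.
set B := 2 * rho * \sum_(j < n) c (lift ord0 j) * omega j.
have hA : -(rho^+2) <= A.
  have : 0 <= \sum_(j < n) c (lift ord0 j) ^+ 2 by apply: sumr_ge0 => j _; apply: sqr_ge0.
  rewrite /A; lra.
have Hroot : forall s, 0 <= s < 1 ->
    let T := sigma (pt c s) + pt c s ord0 - 'i * (rho ^+ 2)%:C in
    T ^+ 2 - 'i * (A +i* B) * T - (A +i* B) = 0.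
  by move=> s hs; exact: (@eq_pt _ _ _ _ homega _ _ _ (hsol _ (@ball_pt _ _ c s hs))).
have h01 : 0 <= (0:R) < 1.
  apply/andP; split; lra.
have E0 := Hroot 0 h01.
set T0 := sigma (pt c 0) + pt c 0 ord0 - 'i * (rho ^+ 2)%:C in E0.
set T1 := 'i * (A +i* B) - T0.
have E1 : T1 ^+ 2 - 'i * (A +i* B) * T1 - (A +i* B) = 0.
  by rewrite -[RHS]E0 /T1; ring.
have b0 := @root_Im _ _ _ _ _ hrho hA E0.
have b1 := @root_Im _ _ _ _ _ hrho hA E1.
set s := Num.max 0 (Num.max (-(complex.Im T0) - rho^+2) (-(complex.Im T1) - rho^+2)).
have hs0 : 0 <= s by rewrite /s le_max lexx.
have hsa : -(complex.Im T0) - rho^+2 <= s by rewrite /s !le_max lexx orbT.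
have hsb : -(complex.Im T1) - rho^+2 <= s by rewrite /s !le_max lexx !orbT.
have hs1 : s < 1.
  rewrite /s !gt_max ltr01 /=; apply/andP; split; lra.
have hs : 0 <= s < 1 by rewrite hs0 hs1.
have Es := Hroot s hs.
have HIm := @Im_pt _ _ c rho s (sigma (pt c s)).
have hpos : 0 <= complex.Im (sigma (pt c s)).
  have eT1 : 'i * (A +i* B) - T0 = T1 by [].
  case: (@root_two _ _ _ _ E0 Es) => h; rewrite h ?eT1 in HIm; lra.
apply: (@le_trans _ _ (complex.Im (sigma (pt c s)))%:E).
  by rewrite lee_fin.
apply: ereal_sup_ubound.
by exists (pt c s); first exact: (@ball_pt _ _ c s hs).
Qed.
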